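(* Let $t\ge 1$ and $t\le k\le v$, $\lambda\ge 1$ be integers, and suppose there exists a $t$-$(v,k,\lambda)$ design whose number of blocks $b=\lambda\binom{v}{t}/\binom{k}{t}$ is divisible by $v$. Then there exists an authentication system with $k$ source states, $v$ messages and $b$ encoding rules which, when the source states are equiprobable and the encoding rules are used with equal probability, has perfect secrecy and is $(t-1)$-fold secure against spoofing. Moreover, this system is optimal (i.e. $b=\binom{v}{t}/\binom{k}{t}$) if and only if $\lambda=1$.
   Context: A $t$-$(v,k,\lambda)$ design is a pair $(X,\mathcal{B})$ where $X$ is a set of $v$ points and $\mathcal{B}$ is a collection of distinct $k$-subsets of $X$ (blocks; no repeated blocks allowed) such that every $t$-subset of $X$ is contained in exactly $\lambda$ blocks; $b=|\mathcal{B}|$. Authentication system: finite sets $\mathcal{S}$ of $k$ source states, $\mathcal{M}$ of $v$ messages, $\mathcal{E}$ of $b$ encoding rules, each $e\in\mathcal{E}$ an injective map $\mathcal{S}\to\mathcal{M}$; $M(e)=\{e(s):s\in\mathcal{S}\}$ is the set of messages valid (accepted) under $e$. A key $e$ is drawn according to a distribution $p_E$ on $\mathcal{E}$, source states according to $p_S$, independently; ''equiprobable source states'' means source states are independent and uniformly distributed, and for each $i$ every $i$-subset of distinct source states is equally likely to be the set of sent source states. Perfect secrecy: $p_S(s\mid m)=p_S(s)$ for every $s\in\mathcal{S}$ and every message $m$ (equivalently, $\sum_{e:\,e(s)=m}p_E(e)=\sum_{e:\,m\in M(e)}p_E(e)p_S(e^{-1}(m))$ for all $s,m$). Spoofing attack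 of order $i$: the opponent observes $i\ge 0$ distinct messages produced from $i$ distinct source states under the same secret key $e$, and then sends a new message distinct from these; he succeeds if it lies in $M(e)$. The deception probability $P_{d_i}$ is the maximum success probability over all opponent strategies. One always has $P_{d_i}\ge (k-i)/(v-i)$, and the system is called $t$-fold secure against spoofing if $P_{d_i}=(k-i)/(v-i)$ for all $0\le i\le t$. A $(t-1)$-fold secure system always has $b\ge \binom{v}{t}/\binom{k}{t}$; it is called optimal when equality holds. *)

(* Defs.v *)
From HB Require Import structures.
From mathcomp Require Import all_boot all_order all_algebra.
Set Implicit Arguments. Unset Strict Implicit. Unset Printing Implicit Defensive.
Import Order.TTheory GRing.Theory Num.Theory.
Local Open Scope ring_scope.

(* t-(v,k,lambda) design on the point set 'I_v : a set B of distinct blocks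
   (a set of k-subsets), every t-subset in exactly lam blocks. b = #|B|. *)
Definition is_design (v t k lam : nat) (B : {set {set 'I_v}}) : Prop :=
  (forall A, A \in B -> #|A| = k) /\
  (forall T : {set 'I_v}, #|T| = t -> #|[set A in B | T \subset A]| = lam).

Section Auth.
Variables (S M E : finType) (enc : E -> S -> M).

Definition valid (e : E) : {set M} := [set enc e s | s : S].

(* Perfect secrecy, in the equivalent form of the context:
   sum_{e : e(s)=m} pE(e) = sum_{e : m in M(e)} pE(e) pS(e^{-1}(m)). *)
Definition perfect_secrecy (pE : E -> rat) (pS : S -> rat) : Prop :=
  forall (s : S) (m : M),
    \sum_(e | enc e s == m) pE e =
    \sum_(e | m \in valid e) pE e * \sum_(s' | enc e s' == m) pS s'.

(* success probability of an opponent strategy f (observed set of messages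
   |-> substituted message) in a spoofing attack of order i; pT is the
   probability that a given i-subset of source states is the sent set. *)
Definition spoof_success (pE : E -> rat) (pT : {set S} -> rat) (i : nat)
    (f : {ffun {set M} -> M}) : rat :=
  \sum_e pE e * \sum_(T : {set S} | #|T| == i)
                 pT T * (f (enc e @: T) \in valid e)%:R.

Definition admissible (i : nat) (f : {ffun {set M} -> M}) : bool :=
  [forall O : {set M}, (#|O| == i) ==> (f O \notin O)].

Definition deception (pE : E -> rat) (pT : {set S} -> rat) (i : nat) : rat :=
  \big[Num.max/0]_(f : {ffun {set M} -> M} | admissible i f)
     spoof_success pE pT i f.

Definition equi_subsets (i : nat) (T : {set S}) : rat := 1 / ('C(#|S|, i))%:R.
Definition uniformS (s : S) : rat := 1 / (#|S|)%:R.
Definition uniformE (e : E) : rat := 1 / (#|E|)%:R.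

Definition fold_secure (pE : E -> rat) (t : nat) : Prop :=
  forall i : nat, (i <= t)%N ->
    deception pE (equi_subsets i) i = ((#|S|)%:R - i%:R) / ((#|M|)%:R - i%:R).

End Auth.

(* Main.v *)
Require Import Defs.
From HB Require Import structures.
From mathcomp Require Import all_boot all_order all_algebra.
From mathcomp Require Import zify ring.
Import Order.TTheory GRing.Theory Num.Theory.

Module Aux.
Set Implicit Arguments. Unset Strict Implicit. Unset Printing Implicit Defensive.

Section Hall.
Variables (I J : finType) (j0 : J).

Lemma bigcupD (N : I -> {set J}) (S : {set J}) (X : {set I}) :
  \bigcup_(i in X) (N i :\: S) = (\bigcup_(i in X) N i) :\: S.
Proof.
apply/setP=> j; rewrite inE; apply/bigcupP/andP.
  by case=> i iX; rewrite inE => /andP[jS jN]; split=> //; apply/bigcupP; exists i.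
by case=> jS /bigcupP[i iX jN]; exists i => //; rewrite inE jS.
Qed.

Lemma bigcupU (N : I -> {set J}) (X Y : {set I}) :
  \bigcup_(i in X :|: Y) N i = (\bigcup_(i in X) N i) :|: \bigcup_(i in Y) N i.
Proof.
apply/setP=> j; rewrite inE; apply/bigcupP/orP.
  case=> i; rewrite inE => /orP[iX|iY] jN; [left|right]; apply/bigcupP; by exists i.
by case=> /bigcupP[i iX jN]; exists i => //; rewrite inE ?iX ?iY ?orbT.
Qed.

Lemma hall_gen n : forall (N : I -> {set J}) (D : {set I}), (#|D| <= n)%N ->
  (forall X : {set I}, X \subset D -> (#|X| <= #|\bigcup_(i in X) N i|)%N) ->
  exists f : I -> J, {in D &, injective f} /\ {in D, forall i, f i \in N i}.
Proof.
elim: n => [|n IH] N D hD hH.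
  have D0 : D = set0 by apply/eqP; rewrite -cards_eq0; lia.
  by exists (fun _ => j0); rewrite D0; split=> i; rewrite inE.
case: (boolP [exists X : {set I}, [&& X \subset D, X != set0, X != D &
          (#|\bigcup_(i in X) N i| <= #|X|)%N]]).
  case/existsP=> X /and4P[sXD nX0 nXD tX].
  have eqX : #|\bigcup_(i in X) N i| = #|X| by have := hH X sXD; lia.
  have ltXD : (#|X| < #|D|)%N by apply: proper_card; rewrite properEneq nXD.
  have [f1 [inj1 in1]] := IH N X ltac:(lia) (fun Y sYX => hH Y (subset_trans sYX sXD)).
  pose NX := \bigcup_(i in X) N i.
  have X0 : (0 < #|X|)%N by rewrite card_gt0.
  have hD2 : (#|D :\: X| <= n)%N by rewrite cardsDS //; lia.
  have hH2 : forall Y : {set I}, Y \subset D :\: X ->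
      (#|Y| <= #|\bigcup_(i in Y) (N i :\: NX)|)%N.
    move=> Y sY; rewrite bigcupD.
    have dYX : [disjoint Y & X].
      apply/pred0P=> i /=; apply/negbTE/negP=> /andP[iY iX].
      by have := subsetP sY i iY; rewrite inE iX.
    have sYXD : Y :|: X \subset D.
      by rewrite subUset sXD andbT; apply: subset_trans sY (subsetDl _ _).
    have := hH _ sYXD; rewrite bigcupU.
    have YX0 : Y :&: X = set0 by apply/eqP; rewrite setI_eq0.
    have := cardsUI Y X; rewrite YX0 cards0 addn0 => dd; rewrite dd.
    have := cardsUI (\bigcup_(i in Y) N i :\: NX) NX.
    have -> : (\bigcup_(i in Y) N i :\: NX) :|: NX = (\bigcup_(i in Y) N i) :|: NX.
      by apply/setP=> j; rewrite !in_setU in_setD; case: (j \in NX); rewrite ?orbT ?orbF.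
    have -> : (\bigcup_(i in Y) N i :\: NX) :&: NX = set0.
      by apply/setP=> j; rewrite in_setI in_setD in_set0; case: (j \in NX); rewrite ?andbF.
    rewrite cards0 addn0 => ->; rewrite /NX eqX; lia.
  have [f2 [inj2 in2]] := IH (fun i => N i :\: NX) (D :\: X) hD2 hH2.
  exists (fun i => if i \in X then f1 i else f2 i); split.
    move=> i i' iD i'D; case: ifP => iX; case: ifP => i'X.
    - exact: inj1.
    - move=> e; have := in2 i'; rewrite inE i'X i'D => /(_ isT).
      rewrite inE -e => /andP[/negP nin _]; case: nin.
      by apply/bigcupP; exists i => //; apply: in1.
    - move=> e; have := in2 i; rewrite inE iX iD => /(_ isT).
      rewrite inE e => /andP[/negP nin _]; case: nin.
      by apply/bigcupP; exists i' => //; apply: in1.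
    - by apply: inj2; rewrite inE ?iX ?i'X.
  move=> i iD; case: ifP => iX; first exact: in1.
  by have := in2 i; rewrite inE iX iD => /(_ isT); rewrite inE => /andP[].
move=> hloose.
have hl : forall X : {set I}, X \subset D -> X != set0 -> X != D ->
    (#|X| < #|\bigcup_(i in X) N i|)%N.
  move=> X sXD nX0 nXD; rewrite ltnNge; apply/negP=> le.
  by move/negP: hloose; apply; apply/existsP; exists X; rewrite sXD nX0 nXD le.
case: (set_0Vmem D) => [-> | [i0 i0D]].
  by exists (fun _ => j0); split=> i; rewrite inE.
have : (0 < #|\bigcup_(i in [set i0]) N i|)%N.
  by have := hH [set i0]; rewrite sub1set cards1 => /(_ i0D).
rewrite card_gt0 => /set0Pn[j1 /bigcupP[ii]]; rewrite inE => /eqP -> j1N.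
have hD1 : (#|D :\ i0| <= n)%N by move: hD; rewrite (cardsD1 i0 D) i0D; lia.
have hH1 : forall Y : {set I}, Y \subset D :\ i0 ->
    (#|Y| <= #|\bigcup_(i in Y) (N i :\ j1)|)%N.
  move=> Y sY; rewrite bigcupD.
  case: (eqVneq Y set0) => [->|nY0]; first by rewrite cards0.
  have sYD : Y \subset D by apply: subset_trans sY (subsetDl _ _).
  have nYD : Y != D.
    apply/eqP=> e; have := subsetP sY i0; rewrite e i0D !inE eqxx => /(_ isT).
    done.
  have := hl Y sYD nY0 nYD.
  have := cardsD1 j1 (\bigcup_(i in Y) N i). case: (j1 \in _); simpl; lia.
have [f1 [inj1 in1]] := IH (fun i => N i :\ j1) (D :\ i0) hD1 hH1.
exists (fun i => if i == i0 then j1 else f1 i); split.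
  have inD1 : forall i, i \in D -> i != i0 -> i \in D :\ i0.
    by move=> i iD ni; rewrite !inE iD ni.
  move=> i i' iD i'D; case: eqP => ii0; case: eqP => i'i0.
  - by move=> _; rewrite ii0 i'i0.
  - move=> e; have := in1 i' (inD1 _ i'D (introN eqP i'i0)).
    by rewrite -e !inE eqxx.
  - move=> e; have := in1 i (inD1 _ iD (introN eqP ii0)).
    by rewrite e !inE eqxx.
  - by apply: inj1; apply: inD1 => //; apply/eqP.
move=> i iD; case: eqP => [->|ni] //.
have := in1 i; rewrite !inE iD andbT => /(_ (introN eqP ni)).
by case/andP.
Qed.

End Hall.

Lemma double_count (E P : finType) (A : E -> {set P}) (X : {set E}) :
  \sum_(e in X) #|A e| = \sum_x #|[set e in X | x \in A e]|.
Proof.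
transitivity (\sum_(e in X) \sum_x (x \in A e : nat)).
  by apply: eq_bigr => e _; rewrite -sum1_card big_mkcond /=; apply: eq_bigr => x _; case: (x \in A e).
rewrite exchange_big /=; apply: eq_bigr => x _.
rewrite -sum1_card [RHS]big_mkcond /= big_mkcond /=; apply: eq_bigr => e _.
by rewrite inE; case: (e \in X); case: (x \in A e).
Qed.

Section Order.
Variables (E P : finType) (x0 : P) (q : nat) (hq : (0 < q)%N).

Lemma capacity n (A : E -> {set P}) :
  (forall e, #|A e| = n.+1) -> (forall x, #|[set e | x \in A e]| = n.+1 * q)%N ->
  exists h : E -> P, (forall e, h e \in A e) /\ forall x, #|[set e | h e == x]| = q.
Proof.
move=> hA hx.
have cE : #|E| = (#|P| * q)%N.
  have := double_count A setT.
  rewrite (eq_bigr (fun _ => n.+1)) => [|e _]; last exact: hA.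
  rewrite sum_nat_const.
  rewrite (eq_bigr (fun _ => (n.+1 * q)%N)) => [|x _]; last first.
    by rewrite -(hx x); apply: eq_card => e; rewrite !inE.
  rewrite !sum_nat_const !cardsT => H.
  have : (n.+1 * #|E| = n.+1 * (#|P| * q))%N.
    change #|xpredT| with #|P| in H; nia.
  by move/eqP; rewrite eqn_pmul2l // => /eqP.
pose j0 : P * 'I_q := (x0, Ordinal hq).
pose N (e : E) : {set P * 'I_q} := setX (A e) setT.
have hH : forall X : {set E}, X \subset setT -> (#|X| <= #|\bigcup_(i in X) N i|)%N.
  move=> X _.
  have -> : \bigcup_(i in X) N i = setX (\bigcup_(i in X) A i) setT.
    apply/setP=> [[x j]]; rewrite inE /= in_setT andbT; apply/bigcupP/bigcupP.
      by case=> e eX; rewrite /N inE /= in_setT andbT => xA; exists e.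
    by case=> e eX xA; exists e => //; rewrite /N inE /= in_setT andbT.
  rewrite cardsX cardsT card_ord.
  set U := \bigcup_(i in X) A i.
  have := double_count A X.
  rewrite (eq_bigr (fun _ => n.+1)) => [|e _]; last exact: hA.
  rewrite sum_nat_const => dc.
  have : (\sum_x #|[set e in X | x \in A e]| <= \sum_x ((x \in U) * (n.+1 * q)))%N.
    apply: leq_sum => x _; case xU: (x \in U); last first.
      rewrite mul0n leqn0 cards_eq0; apply/eqP/setP=> e; rewrite !inE.
      apply/negbTE/negP=> /andP[eX xA]; move/negP: xU; apply; apply/bigcupP; by exists e.
    by rewrite mul1n -(hx x); apply: subset_leq_card; apply/subsetP=> e; rewrite !inE => /andP[].
  have -> : (\sum_x ((x \in U) * (n.+1 * q)) = #|U| * (n.+1 * q))%N.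
    rewrite -sum_nat_const [RHS]big_mkcond /=; apply: eq_bigr => x _.
    by case: (x \in U); rewrite ?mul1n ?mul0n.
  rewrite -dc => le.
  have : (n.+1 * #|X| <= n.+1 * (#|U| * q))%N by move: le; rewrite mulnC; lia.
  by rewrite leq_pmul2l.
have [f [finj fN]] := hall_gen j0 (leqnn #|[set: E]|) hH.
have injf : injective f by move=> e e'; apply: finj; rewrite inE.
have surj : f @: setT = setT.
  apply/eqP; rewrite eqEcard subsetT /= card_imset // cardsT cardsT card_prod card_ord cE.
  by [].
exists (fun e => (f e).1); split.
  by move=> e; have := fN e (in_setT e); rewrite /N inE => /andP[].
move=> x.
rewrite -(card_imset _ injf).
have -> : f @: [set e | (f e).1 == x] = setX [set x] setT.
  apply/setP=> [[y j]]; rewrite !inE andbT; apply/imsetP/idP.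
    by case=> e; rewrite inE => /eqP <- ->.
  move=> /eqP yx; have : (y, j) \in f @: setT by rewrite surj inE.
  by case/imsetP=> e _ fe; exists e => //; rewrite inE -fe yx.
by rewrite cardsX cards1 cardsT card_ord mul1n.
Qed.

Lemma ordering n : forall A : E -> {set P}, (forall e, #|A e| = n) ->
  (forall x, #|[set e | x \in A e]| = n * q)%N ->
  exists g : E -> nat -> P,
    (forall e s s', (s < n)%N -> (s' < n)%N -> g e s = g e s' -> s = s') /\
    (forall e s, (s < n)%N -> g e s \in A e) /\
    (forall s x, (s < n)%N -> #|[set e | g e s == x]| = q).
Proof.
elim: n => [|n IH] A hA hx.
  by exists (fun _ _ => x0).
have [h [hA1 hcnt]] := capacity hA hx.
pose A' e := A e :\ h e.
have hA' : forall e, #|A' e| = n.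
  by move=> e; have := cardsD1 (h e) (A e); rewrite hA1 hA add1n => -[].
have hx' : forall x, #|[set e | x \in A' e]| = (n * q)%N.
  move=> x; have := cardsID [set e | h e == x] [set e | x \in A e].
  have -> : [set e | x \in A e] :&: [set e | h e == x] = [set e | h e == x].
    apply/setP=> e; rewrite !inE; case: eqP => [<-|]; by rewrite ?andbF ?andbT ?hA1.
  have -> : [set e | x \in A e] :\: [set e | h e == x] = [set e | x \in A' e].
    by apply/setP=> e; rewrite !inE eq_sym andbC.
  rewrite hcnt hx; lia.
have [g [ginj [gA gcnt]]] := IH A' hA' hx'.
exists (fun e s => if s == n then h e else g e s); split; [|split].
- move=> e s s' ls ls'; case: eqP => sn; case: eqP => s'n.
  + by rewrite sn s'n.
  + have := gA e s'; rewrite /A' => /(_ ltac:(lia)).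
    by move=> H e'; move: H; rewrite -e' !inE eqxx.
  + have := gA e s; rewrite /A' => /(_ ltac:(lia)).
    by move=> H e'; move: H; rewrite e' !inE eqxx.
  + by apply: ginj; lia.
- move=> e s ls; case: eqP => sn //.
  by have := gA e s ltac:(lia); rewrite !inE => /andP[].
- move=> s x ls; case: eqP => sn; first by [].
  by apply: gcnt; lia.
Qed.

End Order.

Section Design.
Variables (v k t lam : nat) (B : {set {set 'I_v}}).
Hypothesis hBk : forall A, A \in B -> #|A| = k.
Hypothesis hBt : forall T : {set 'I_v}, #|T| = t -> #|[set A in B | T \subset A]| = lam.
Hypothesis htk : (t <= k)%N.

Definition mu (O : {set 'I_v}) := #|[set A in B | O \subset A]|.

Lemma mu_key (O : {set 'I_v}) :
  (mu O * (k - #|O|) = \sum_(x | x \notin O) mu (x |: O))%N.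
Proof.
have := double_count (fun A => A :\: O) [set A in B | O \subset A].
rewrite (eq_bigr (fun _ => k - #|O|)%N) => [|A]; last first.
  by rewrite inE => /andP[AB sOA]; rewrite cardsDS // hBk.
rewrite sum_nat_const -/(mu O) mulnC => ->.
rewrite [RHS]big_mkcond /=; apply: eq_bigr => x _.
case: ifP => xO.
  rewrite /mu; apply: eq_card => A.
  rewrite !inE subUset sub1set xO /=.
  by case: (A \in B); case: (x \in A); case: (O \subset A).
apply/eqP; rewrite cards_eq0; apply/eqP/setP=> A; rewrite !inE.
by move/negbFE: xO => ->; rewrite !andbF.
Qed.

Lemma mu_const d : (d <= t)%N ->
  exists c, forall O : {set 'I_v}, #|O| = (t - d)%N -> mu O = c.
Proof.
elim: d => [|d IH] ld.
  by exists lam => O; rewrite subn0; apply: hBt.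
have [c hc] := IH (ltnW ld).
exists (((v - (t - d.+1)) * c) %/ (k - (t - d.+1)))%N => O hO.
have kpos : (0 < k - (t - d.+1))%N by lia.
have := mu_key O.
rewrite (eq_bigr (fun _ => c)) => [|x xO]; last first.
  by apply: hc; rewrite cardsU1 xO hO; lia.
rewrite sum_nat_const.
have -> : #|[pred x | x \notin O]| = (v - (t - d.+1))%N.
  have := cardC O; rewrite card_ord hO.
  have -> : #|[predC O]| = #|[pred x | x \notin O]| by apply: eq_card.
  lia.
by rewrite hO => <-; rewrite mulnK.
Qed.

Lemma sum_mu i : (\sum_(O : {set 'I_v} | #|O| == i) mu O = #|B| * 'C(k, i))%N.
Proof.
transitivity (\sum_(O in [set O : {set 'I_v} | #|O| == i]) mu O)%N.
  by apply: eq_bigl => O; rewrite inE.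
rewrite /mu (double_count (fun O : {set 'I_v} => [set A in B | O \subset A])).
rewrite (bigID (fun A => A \in B)) /= [X in (_ + X)%N]big1 ?addn0; last first.
  move=> A AB; apply/eqP; rewrite cards_eq0; apply/eqP/setP=> O; rewrite !inE.
  by rewrite (negbTE AB) andbF.
rewrite -sum_nat_const; apply: eq_bigr => A AB.
rewrite -(hBk AB) -cards_draws; apply: eq_card => O; rewrite !inE AB /=.
by rewrite andbC.
Qed.

End Design.

End Aux.
Import Aux.

Local Open Scope ring_scope.

Lemma card_enum_val (v : nat) (B : {set {set 'I_v}}) (p : pred {set 'I_v}) :
  #|[set e : 'I_#|B| | p (enum_val e)]| = #|[set A in B | p A]|.
Proof.
rewrite -(card_imset _ (@enum_val_inj _ (mem B))).
apply: eq_card => A; rewrite !inE.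
apply/imsetP/andP.
  by case=> e; rewrite inE => pe ->; split=> //; apply: enum_valP.
case=> AB pA; exists (enum_rank_in AB A); last by rewrite enum_rankK_in.
by rewrite inE enum_rankK_in.
Qed.

Lemma bigmax_const (T : finType) (P : pred T) (c : rat) (x : T) :
  P x -> 0 <= c -> \big[Num.max/0]_(y | P y) c = c.
Proof.
move=> Px c0; rewrite big_const_seq.
have : (0 < count P (index_enum T))%N.
  by rewrite -has_count; apply/hasP; exists x => //; apply: mem_index_enum.
case: (count _ _) => // n _; elim: n => [|n IH].
  by rewrite /= max_l.
by rewrite iterS IH maxxx.
Qed.

Theorem mainTheorem1 (t k v lam : nat)
  (ht : (1 <= t)%N) (htk : (t <= k)%N) (hkv : (k <= v)%N) (hlam : (1 <= lam)%N)
  (B : {set {set 'I_v}}) (hB : is_design t k lam B) (hdiv : (v %| #|B|)%N) :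
  exists enc : 'I_#|B| -> 'I_k -> 'I_v,
    (forall e, injective (enc e)) /\
    perfect_secrecy enc (uniformE (E:='I_#|B|)) (uniformS (S:='I_k)) /\
    fold_secure enc (uniformE (E:='I_#|B|)) t.-1 /\
    ((#|B|)%:R = ('C(v, t))%:R / ('C(k, t))%:R :> rat <-> lam = 1%N).
Proof.
case: hB => hBk hBt.
set b := #|B|.
have v0 : (0 < v)%N by lia.
have Cvt : (0 < 'C(v, t))%N by rewrite bin_gt0; lia.
have Ckt : (0 < 'C(k, t))%N by rewrite bin_gt0.
have hbt : (b * 'C(k, t) = 'C(v, t) * lam)%N.
  rewrite -(sum_mu hBk) (eq_bigr (fun _ => lam)) => [|O /eqP hO]; last first.
    by rewrite /mu hBt.
  rewrite (eq_bigl (fun O => O \in [set O : {set 'I_v} | #|O| == t])); last first.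
    by move=> O; rewrite inE.
  by rewrite sum_nat_const card_draws card_ord mulnC.
have b0 : (0 < b)%N.
  have : (0 < b * 'C(k, t))%N by rewrite hbt muln_gt0 Cvt; lia.
  by rewrite muln_gt0 => /andP[].
set q := (b %/ v)%N.
have hbq : b = (q * v)%N by rewrite divnK.
have q0 : (0 < q)%N by move: b0; rewrite hbq muln_gt0 => /andP[].
have [c1 hc1] := mu_const hBk hBt htk (leq_pred t).
have c1E : c1 = (k * q)%N.
  have := mu_key hBk set0.
  rewrite cards0 subn0 (eq_bigr (fun _ => c1)) => [|x _]; last first.
    by apply: hc1; rewrite setU0 cards1; lia.
  have -> : mu B set0 = b.
    by apply: eq_card => A; rewrite !inE sub0set andbT.
  rewrite (eq_bigl (fun x => x \in [set: 'I_v])) ?sum_nat_const ?cardsT ?card_ord; last first.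
    by move=> x; rewrite !inE.
  rewrite hbq => H.
  have : (v * (k * q) = v * c1)%N by rewrite -H; lia.
  by move/eqP; rewrite eqn_pmul2l // => /eqP.
pose x0 : 'I_v := Ordinal v0.
have hA : forall e : 'I_b, #|(enum_val e : {set 'I_v})| = k.
  by move=> e; apply: hBk; apply: enum_valP.
have hx : forall x : 'I_v, #|[set e : 'I_b | x \in (enum_val e : {set 'I_v})]| = (k * q)%N.
  move=> x; rewrite (@card_enum_val _ B (fun A => x \in A)) -c1E -(hc1 [set x]); last by rewrite cards1; lia.
  by apply: eq_card => A; rewrite !inE sub1set.
have [g [ginj [gA gcnt]]] := ordering x0 q0 hA hx.
pose enc (e : 'I_b) (s : 'I_k) : 'I_v := g e (val s).
have encinj : forall e, injective (enc e).
  by move=> e s s' /(ginj e _ _ (ltn_ord s) (ltn_ord s')) /val_inj.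
have Ve : forall e, valid enc e = enum_val e.
  move=> e; apply/setP/subset_eqP; rewrite -eqEsubset eqEcard card_imset // hA card_ord leqnn andbT.
  by apply/subsetP=> m; rewrite /valid; case/imsetP=> s _ ->; apply: gA (ltn_ord s).
have cnt : forall s m, #|[set e | enc e s == m]| = q.
  by move=> s m; exact: (gcnt (val s) m (ltn_ord s)).
exists enc; split; first exact: encinj.
have bR : (b%:R : rat) != 0 by rewrite pnatr_eq0 -lt0n.
have kR : (k%:R : rat) != 0 by rewrite pnatr_eq0 -lt0n; lia.
split.
  move=> s m; rewrite /uniformE /uniformS !card_ord.
  rewrite (eq_bigl (fun e => e \in [set e | enc e s == m])); last by move=> e; rewrite inE.
  rewrite sumr_const cnt.
  rewrite (eq_bigr (fun _ => 1 / b%:R * (1 / k%:R))) => [|e me]; last first.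
    congr (_ * _).
    have : m \in valid enc e by [].
    case/imsetP=> s0 _ ms0.
    rewrite (eq_bigl (fun s' => s' \in [set s0])); last first.
      by move=> s'; rewrite inE ms0; apply/eqP/eqP => [/encinj|->].
    by rewrite sumr_const cards1.
  rewrite (eq_bigl (fun e => e \in [set e : 'I_b | m \in (enum_val e : {set 'I_v})])); last first.
    by move=> e; rewrite inE Ve.
  rewrite sumr_const hx -[_ *+ q]mulr_natl -[_ *+ (k * q)%N]mulr_natl natrM.
  by field; apply/andP.
have CkR : ('C(k, t)%:R : rat) != 0 by rewrite pnatr_eq0 -lt0n.
split; last first.
  split.
    move=> H.
    have : ((b * 'C(k, t))%:R : rat) = ('C(v, t))%:R by rewrite natrM H divfK.
    rewrite hbt => /eqP; rewrite eqr_nat -{2}['C(v, t)]muln1 eqn_pmul2l //.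
    by move/eqP.
  by move=> l1; apply: (mulIf CkR); rewrite divfK // -natrM hbt l1 muln1.
move=> i li.
have lit : (i < t)%N by lia.
have [ci hci] : exists c, forall O : {set 'I_v}, #|O| = i -> mu B O = c.
  have [c hc] := mu_const hBk hBt htk (leq_subr i t).
  by exists c => O hO; apply: hc; lia.
have [ci1 hci1] : exists c, forall O : {set 'I_v}, #|O| = i.+1 -> mu B O = c.
  have [c hc] := mu_const hBk hBt htk (leq_subr i.+1 t).
  by exists c => O hO; apply: hc; lia.
have Cvi : (0 < 'C(v, i))%N by rewrite bin_gt0; lia.
have Cki : (0 < 'C(k, i))%N by rewrite bin_gt0; lia.
have R1 : ('C(v, i) * ci = b * 'C(k, i))%N.
  rewrite -(sum_mu hBk) (eq_bigr (fun _ => ci)) => [|O /eqP hO]; last by rewrite hci.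
  rewrite (eq_bigl (fun O => O \in [set O : {set 'I_v} | #|O| == i])); last first.
    by move=> O; rewrite inE.
  by rewrite sum_nat_const card_draws card_ord mulnC.
have R2 : (ci * (k - i) = (v - i) * ci1)%N.
  have : (0 < #|[set O : {set 'I_v} | #|O| == i]|)%N by rewrite card_draws card_ord.
  rewrite card_gt0 => /set0Pn[O]; rewrite inE => /eqP hO.
  have := mu_key hBk O; rewrite hO (hci O hO) => ->.
  rewrite (eq_bigr (fun _ => ci1)) => [|x xO]; last first.
    by apply: hci1; rewrite cardsU1 xO hO.
  rewrite sum_nat_const.
  have -> : #|[pred x | x \notin O]| = (v - i)%N.
    have := cardC O; rewrite card_ord hO.
    have -> : #|[predC O]| = #|[pred x | x \notin O]| by apply: eq_card.
    lia.
  by [].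
have cnt_spoof : forall f : {ffun {set 'I_v} -> 'I_v}, admissible i f ->
    (\sum_(e : 'I_b) \sum_(T : {set 'I_k} | #|T| == i)
        (f (enc e @: T) \in valid enc e : nat) = 'C(v, i) * ci1)%N.
  move=> f adm.
  transitivity (\sum_(e : 'I_b) \sum_(O : {set 'I_v} | #|O| == i)
        ((O \subset valid enc e) && (f O \in valid enc e) : nat))%N.
    apply: eq_bigr => e _.
    set W := valid enc e.
    have imO : forall O : {set 'I_v}, O \subset W -> enc e @: (enc e @^-1: O) = O.
      move=> O sOW; apply/setP=> y; apply/imsetP/idP.
        by case=> s0; rewrite inE => ys ->.
      move=> yO; have := subsetP sOW y yO; case/imsetP=> s0 _ ys.
      by exists s0 => //; rewrite inE -ys.
    have eqS : [set O : {set 'I_v} | O \subset W & #|O| == i] =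
               [set enc e @: T | T : {set 'I_k} in [set T : {set 'I_k} | #|T| == i]].
      apply/setP=> O; rewrite inE; apply/andP/imsetP.
        case=> sOW /eqP hO; exists (enc e @^-1: O); last by rewrite imO.
        by rewrite inE -hO -{2}(imO O sOW) (card_imset _ (encinj e)).
      case=> T; rewrite inE => /eqP hT ->; split.
        by apply/subsetP=> y; case/imsetP=> s0 _ ->; apply/imsetP; exists s0.
      by rewrite (card_imset _ (encinj e)) hT.
    transitivity (\sum_(O in [set O : {set 'I_v} | O \subset W & #|O| == i]) (f O \in W : nat))%N.
      rewrite eqS big_imset /=; last by move=> T1 T2 _ _; apply: imset_inj.
      by apply: eq_bigl => T; rewrite inE.
    rewrite big_mkcond [RHS]big_mkcond /=; apply: eq_bigr => O _.
    by rewrite inE; case: (O \subset W); case: (#|O| == i).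
  rewrite exchange_big /=.
  rewrite (eq_bigr (fun _ => ci1)) => [|O /eqP hO]; last first.
    rewrite -(hci1 (f O |: O)); last first.
      rewrite cardsU1 hO.
      by move/forallP: adm => /(_ O); rewrite hO eqxx /= => ->.
    transitivity #|[set e : 'I_b | f O |: O \subset (enum_val e : {set 'I_v})]|; last first.
      by rewrite (@card_enum_val _ B (fun A => f O |: O \subset A)).
    rewrite -sum1_card [RHS]big_mkcond /=; apply: eq_bigr => e _.
    by rewrite inE Ve subUset sub1set andbC; case: (_ && _).
  rewrite (eq_bigl (fun O => O \in [set O : {set 'I_v} | #|O| == i])); last first.
    by move=> O; rewrite inE.
  by rewrite sum_nat_const card_draws card_ord.
pose val : rat := ('C(v, i) * ci1)%:R / (b%:R * ('C(k, i))%:R).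
have CkiR : ('C(k, i)%:R : rat) != 0 by rewrite pnatr_eq0 -lt0n.
have sp : forall f, admissible i f ->
    spoof_success enc (uniformE (E:='I_b)) (equi_subsets (S:='I_k) i) i f = val.
  move=> f adm; rewrite /spoof_success /uniformE /equi_subsets !card_ord.
  rewrite (eq_bigr (fun e => (1 / b%:R * (1 / ('C(k, i))%:R)) *
     (\sum_(T : {set 'I_k} | #|T| == i) (f (enc e @: T) \in valid enc e : nat))%:R))
     => [|e _]; last first.
    rewrite natr_sum -mulrA; congr (_ * _); rewrite mulr_sumr.
    by apply: eq_bigr => T _.
  rewrite -mulr_sumr -natr_sum cnt_spoof // /val.
  by field; apply/andP.
pose f0 : {ffun {set 'I_v} -> 'I_v} := [ffun O => odflt x0 [pick x in ~: O]].
have adm0 : admissible i f0.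
  apply/forallP=> O; apply/implyP=> /eqP hO; rewrite ffunE.
  case: pickP => [x xO|H]; first by rewrite inE in xO.
  have : #|~: O| = 0%N.
    apply/eqP; rewrite cards_eq0; apply/eqP/setP=> x; rewrite H inE.
    by [].
  have := cardsC O; rewrite card_ord hO; lia.
rewrite /deception (eq_bigr (fun _ => val)) => [|f adm]; last exact: sp.
rewrite (@bigmax_const _ (admissible i) val f0) //; last first.
  by rewrite /val divr_ge0 // ?mulr_ge0 // ler0n.
rewrite /val !card_ord.
have ci0 : (0 < ci)%N.
  have : (0 < b * 'C(k, i))%N by rewrite muln_gt0 b0 Cki.
  by rewrite -R1 muln_gt0 => /andP[].
have viR : (v%:R - i%:R : rat) != 0 by rewrite -natrB ?pnatr_eq0; lia.
have R2' : (ci1%:R : rat) = ci%:R * (k%:R - i%:R) / (v%:R - i%:R).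
  rewrite -!natrB; try lia.
  rewrite -natrM R2 natrM; field.
  by rewrite pnatr_eq0; lia.
have R1' : (b%:R * ('C(k, i))%:R : rat) = ('C(v, i))%:R * ci%:R by rewrite -!natrM R1.
have CviR : ('C(v, i)%:R : rat) != 0 by rewrite pnatr_eq0 -lt0n.
have ciR : (ci%:R : rat) != 0 by rewrite pnatr_eq0 -lt0n.
rewrite R1' natrM R2'.
by field; rewrite viR CviR ciR.
Qed.
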